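(* Let $x_0\in\mathbb{R}^2$, $r_0>0$, and let $K$ be a relatively closed subset of $B(x_0,r_0)$ containing $x_0$. If $K$ separates $B(x_0,r_0)$, then $\beta^{\rm bil}_K(x_0,r_0)\le4\beta_K(x_0,r_0)$.
   Context: $B(x,r)$ is the open ball. Flatness: $\beta_K(x_0,r_0)=r_0^{-1}\inf_\ell\sup_{y\in K\cap B(x_0,r_0)}\mathrm{dist}(y,\ell)$, infimum over lines $\ell$ through $x_0$ (attained); $\nu(x_0,r_0)$ is a unit normal of a chosen minimizing line, and $D^\pm_t(x_0,r_0)=\{x\in B(x_0,r_0):\pm(x-x_0)\cdot\nu(x_0,r_0)>t\}$. Bilateral flatness: $\beta^{\rm bil}_K(x_0,r_0)=r_0^{-1}\inf_\ell\max\{\sup_{y\in K\cap B(x_0,r_0)}\mathrm{dist}(y,\ell),\sup_{y\in\ell\cap B(x_0,r_0)}\mathrm{dist}(y,K)\}$, infimum over lines through $x_0$. $K$ separates $B(x_0,r_0)$ if $\beta:=\beta_K(x_0,r_0)\le1/2$ and $D^+_{\beta r_0}(x_0,r_0)$, $D^-_{\beta r_0}(x_0,r_0)$ lie in distinct connected components of $B(x_0,r_0)\setminus K$. *)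

(* Defs.v *)
(* R : realType, points of the plane are pairs R * R
   (product topology = Euclidean topology). *)
From mathcomp Require Import all_boot all_order all_algebra.
From mathcomp Require Import all_classical all_reals all_analysis.
Set Implicit Arguments. Unset Strict Implicit. Unset Printing Implicit Defensive.
Import Order.TTheory GRing.Theory Num.Theory.
Import numFieldNormedType.Exports.
Local Open Scope classical_set_scope.
Local Open Scope ring_scope.

Section Flatness.
Variable R : realType.
Implicit Types (x y z u : R * R) (K A : set (R * R)) (t : R).

Definition edist x y : R := Num.sqrt ((x.1 - y.1) ^+ 2 + (x.2 - y.2) ^+ 2).
Definition oball x (r0 : R) : set (R * R) := [set y | edist x y < r0].
Definition setdist y A : R := inf [set edist y z | z in A].
Definition unitv u : Prop := u.1 ^+ 2 + u.2 ^+ 2 = 1.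
Definition line (x0 : R * R) u : set (R * R) :=
  [set (x0.1 + t * u.1, x0.2 + t * u.2) | t in [set: R]].
Definition normalv u : R * R := (- u.2, u.1).
Definition dotp x y : R := x.1 * y.1 + x.2 * y.2.

Definition flat_width K (x0 : R * R) (r0 : R) u : R :=
  sup [set setdist y (line x0 u) | y in K `&` oball x0 r0].
Definition beta K (x0 : R * R) (r0 : R) : R :=
  inf [set flat_width K x0 r0 u / r0 | u in unitv].
Definition bil_width K (x0 : R * R) (r0 : R) u : R :=
  Num.max (flat_width K x0 r0 u)
          (sup [set setdist y K | y in line x0 u `&` oball x0 r0]).
Definition beta_bil K (x0 : R * R) (r0 : R) : R :=
  inf [set bil_width K x0 r0 u / r0 | u in unitv].

Definition Dplus (x0 : R * R) (r0 : R) u t : set (R * R) :=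
  [set x | oball x0 r0 x /\
     dotp (x.1 - x0.1, x.2 - x0.2) (normalv u) > t].
Definition Dminus (x0 : R * R) (r0 : R) u t : set (R * R) :=
  [set x | oball x0 r0 x /\
     - dotp (x.1 - x0.1, x.2 - x0.2) (normalv u) > t].

Definition separates_wrt K (x0 : R * R) (r0 : R) u : Prop :=
  [/\ unitv u,
      flat_width K x0 r0 u / r0 = beta K x0 r0,
      beta K x0 r0 <= 1 / 2 &
      forall x y, Dplus x0 r0 u (beta K x0 r0 * r0) x ->
                  Dminus x0 r0 u (beta K x0 r0 * r0) y ->
        ~ @connected_component (R * R)%type (oball x0 r0 `\` K) x y].

End Flatness.

(* Main.v *)
Require Import Defs.
From mathcomp Require Import all_boot all_order all_algebra.
From mathcomp Require Import all_classical all_reals all_analysis.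
From mathcomp Require Import ring lra.
Import Order.TTheory GRing.Theory Num.Theory.
Import numFieldNormedType.Exports.
Local Open Scope classical_set_scope.
Local Open Scope ring_scope.

Section H.
Variable R : realType.

Lemma sqrt_ltW (q r : R) : 0 < r -> q < r ^+ 2 -> Num.sqrt q < r.
Proof.
move=> r0 qr; have := ltr_sqrt q (exprn_gt0 2 r0); rewrite sqrtr_sqr gtr0_norm // => ->.
done.
Qed.

Lemma sqrt_leW (q r : R) : 0 <= r -> q <= r ^+ 2 -> Num.sqrt q <= r.
Proof.
move=> r0 qr; have := ler_sqrt q (exprn_ge0 2 r0); rewrite sqrtr_sqr ger0_norm // => ->.
done.
Qed.

Lemma sqrt_lt_inv (q r : R) : 0 <= q -> Num.sqrt q < r -> q < r ^+ 2.
Proof.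
move=> q0 qr; rewrite -(sqr_sqrtr q0); have := sqrtr_ge0 q; nra.
Qed.

Lemma sup_ge0 (E : set R) : (forall x, E x -> 0 <= x) -> 0 <= sup E.
Proof.
move=> H; have [[x Ex]|E0] := pselect (exists x, E x); last first.
  suff -> : E = set0 by rewrite sup0.
  by apply/seteqP; split => x // Ex; apply: E0; exists x.
 have [hs|hs] := pselect (has_sup E).
  exact: le_trans (H _ Ex) (sup_upper_bound hs Ex).
by rewrite sup_out.
Qed.

Lemma inf_ge0 (E : set R) : (forall x, E x -> 0 <= x) -> 0 <= inf E.
Proof.
move=> H; have [[x Ex]|E0] := pselect (exists x, E x); last first.
  suff -> : E = set0 by rewrite inf0.
  by apply/seteqP; split => x // Ex; apply: E0; exists x.
 apply: lb_le_inf; first by exists x.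
by move=> y /H.
Qed.

Lemma move_lemma (s t r0 : R) : s ^+ 2 < r0 ^+ 2 -> 0 < t -> 4 * t < r0 ->
  exists c, `|s - c| <= 2 * t /\ c ^+ 2 + t ^+ 2 < r0 ^+ 2.
Proof.
move=> hs ht htr.
have [h1|h1] := ltP (s ^+ 2 + t ^+ 2) (r0 ^+ 2).
  by exists s; rewrite subrr normr0; split => //; lra.
have [hs0|hs0] := leP 0 s.
  exists (s - 2 * t); rewrite opprB addrCA subrr addr0 ger0_norm; last lra.
  split => //. 
  have : 5 * t <= 4 * s by nra.
  nra.
exists (s + 2 * t); rewrite opprD addrA subrr add0r normrN ger0_norm; last lra.
split => //.
have : 5 * t <= - 4 * s by nra.
nra.
Qed.

Lemma edist_sq (a b : R * R) : Defs.edist a b = Num.sqrt ((a.1 - b.1) ^+ 2 + (a.2 - b.2) ^+ 2).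
Proof. by []. Qed.

Lemma seg_hits (x0 : R * R) (r0 : R) (K : set (R * R)) (u : R * R) (s t : R) :
  0 < r0 -> 0 < t -> separates_wrt K x0 r0 u -> beta K x0 r0 * r0 < t ->
  s ^+ 2 + t ^+ 2 < r0 ^+ 2 ->
  exists tau, `|tau| <= t /\
    K (x0.1 + s * u.1 - tau * u.2, x0.2 + s * u.2 + tau * u.1).
Proof.
move=> r0p t0 [un _ _ sep] ht hst.
apply: contrapT => nK.
pose f := fun tau : R => (x0.1 + s * u.1 - tau * u.2, x0.2 + s * u.2 + tau * u.1).
have hb : forall tau, `|tau| <= t -> oball x0 r0 (f tau).
  move=> tau htau; rewrite /oball /= edist_sq /=; apply: sqrt_ltW => //.
  have e : (x0.1 - (x0.1 + s * u.1 - tau * u.2)) ^+ 2 + (x0.2 - (x0.2 + s * u.2 + tau * u.1)) ^+ 2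
     = s ^+ 2 + tau ^+ 2.
    rewrite /unitv in un; nra.
  rewrite e; have : tau ^+ 2 <= t ^+ 2.
    by move: htau; rewrite ler_norml => /andP[h1 h2]; nra.
  lra.
have t0' : 0 <= t by lra.
apply: (sep (f t) (f (- t))).
- split; first by apply: hb; rewrite ger0_norm //.

  rewrite /dotp /normalv /=; rewrite /unitv in un.
  suff -> : (x0.1 + s * u.1 - t * u.2 - x0.1) * - u.2 + (x0.2 + s * u.2 + t * u.1 - x0.2) * u.1 = t by [].
  nra.
- split; first by apply: hb; rewrite normrN ger0_norm //.

  rewrite /dotp /normalv /=; rewrite /unitv in un.
  suff -> : - ((x0.1 + s * u.1 - - t * u.2 - x0.1) * - u.2 + (x0.2 + s * u.2 + - t * u.1 - x0.2) * u.1) = t by [].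
  nra.
exists (f @` `[-t, t]).
  split.
  - exists t => //; rewrite /= in_itv /= lexx andbT; lra.
  - move=> _ [tau htau <-]; split.
      apply: hb; move: htau => /=; rewrite in_itv /= => /andP[h1 h2].
      by rewrite ler_norml h1 h2.
    move=> Kf; apply: nK; exists tau; split => //.
    by move: htau => /=; rewrite in_itv /= => /andP[h1 h2]; rewrite ler_norml h1 h2.
  - apply: connected_continuous_connected.
      by apply/connected_intervalP; exact: interval_is_interval.
    apply: continuous_subspaceT => x.
    rewrite /f /continuous_at; apply: (@cvg_pair _ _ _ _ (nbhs (_ : R)) (nbhs (_ : R))) => /=.
      apply: cvgB; first exact: cvg_cst.
      by apply: cvgMl; exact: cvg_id.
    apply: cvgD; first exact: cvg_cst.
    by apply: cvgMl; exact: cvg_id.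
by exists (- t) => //=; rewrite in_itv /= lexx /=; lra.
Qed.

Lemma setdist_ge0 (y : R * R) (A : set (R * R)) : 0 <= setdist y A.
Proof. by apply: inf_ge0 => _ [z _ <-]; exact: sqrtr_ge0. Qed.

Lemma setdist_le (y z : R * R) (A : set (R * R)) : A z -> setdist y A <= Defs.edist y z.
Proof.
move=> Az; apply: ge_inf; last by exists z.
by exists 0 => _ [w _ <-]; exact: sqrtr_ge0.
Qed.

Lemma flat_width_ge0 K x0 r0 (v : R * R) : 0 <= flat_width K x0 r0 v.
Proof. by apply: sup_ge0 => _ [y _ <-]; exact: setdist_ge0. Qed.

Lemma bil_width_ge0 K x0 r0 (v : R * R) : 0 <= bil_width K x0 r0 v.
Proof. by rewrite /bil_width le_max flat_width_ge0. Qed.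
End H.
Arguments sqrt_lt_inv {R}.
Arguments setdist_le {R}.
Arguments move_lemma {R}.
Arguments seg_hits {R}.

Theorem lemma4p2 (R : realType) (x0 : R * R) (r0 : R) (K : set (R * R))
  (u : R * R) :
  0 < r0 ->
  K `<=` oball x0 r0 ->
  (exists F : set (R * R), closed F /\ K = F `&` oball x0 r0) ->
  K x0 ->
  separates_wrt K x0 r0 u ->
  beta_bil K x0 r0 <= 4 * beta K x0 r0.
Proof.
move=> r0p _ _ Kx0 sep.
have sep' := sep; case: sep' => un hfw hb _.
set b := beta K x0 r0 in hfw hb sep *.
set h := b * r0.
have fwE : flat_width K x0 r0 u = h.
  by rewrite /h -hfw -mulrA mulVf ?mulr1 // gt_eqF.
have h0 : 0 <= h by rewrite -fwE flat_width_ge0.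
have b0 : 0 <= b by move: h0; rewrite /h pmulr_lge0.
have key : forall y, (line x0 u `&` oball x0 r0) y -> setdist y K <= 4 * h.
  move=> _ [[s _ <-] yb].
  move: yb; rewrite /oball /= edist_sq /= => yb.
  have es : (x0.1 - (x0.1 + s * u.1)) ^+ 2 + (x0.2 - (x0.2 + s * u.2)) ^+ 2 = s ^+ 2.
    rewrite /unitv in un; nra.
  rewrite es in yb; have s2 := sqrt_lt_inv _ _ (sqr_ge0 s) yb.
  have [h4|h4] := leP r0 (4 * h).
    apply: le_trans (setdist_le _ _ _ Kx0) _.
    rewrite edist_sq; apply/ltW/(lt_le_trans _ h4)/sqrt_ltW => //.
    have -> : (x0.1 + s * u.1 - x0.1) ^+ 2 + (x0.2 + s * u.2 - x0.2) ^+ 2 = s ^+ 2 * (u.1 ^+ 2 + u.2 ^+ 2) by rewrite /=; ring.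
    by rewrite un mulr1.
  apply/ler_addgt0Pr => e e0.
  set m := Num.min (e / 3) ((r0 - 4 * h) / 8).
  have m0 : 0 < m by rewrite lt_min; apply/andP; split; lra.
  have m1 : m <= e / 3 by rewrite ge_min lexx.
  have m2 : m <= (r0 - 4 * h) / 8 by rewrite ge_min lexx orbT.
  have t0 : 0 < h + m by lra.
  have t4 : 4 * (h + m) < r0 by lra.
  have tb : b * r0 < h + m by rewrite -/h; lra.
  have [c [hc1 hc2]] := move_lemma _ _ _ s2 t0 t4.
  have [tau [ht Kz]] := seg_hits _ _ _ _ _ _ r0p t0 sep tb hc2.
  apply: le_trans (setdist_le _ _ _ Kz) _.
  rewrite edist_sq /=; apply: le_trans (_ : 3 * (h + m) <= _); last lra.
  apply: sqrt_leW; first lra.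
  move: hc1 ht; rewrite !ler_norml => /andP[a1 a2] /andP[a3 a4].
  rewrite /unitv in un.
  have -> : (x0.1 + s * u.1 - (x0.1 + c * u.1 - tau * u.2)) ^+ 2 +
     (x0.2 + s * u.2 - (x0.2 + c * u.2 + tau * u.1)) ^+ 2 = (s - c) ^+ 2 * (u.1 ^+ 2 + u.2 ^+ 2) + tau ^+ 2 * (u.1 ^+ 2 + u.2 ^+ 2) by ring.
  rewrite un !mulr1; nra.
have bw : bil_width K x0 r0 u <= 4 * h.
  rewrite /bil_width ge_max fwE; apply/andP; split; first lra.
  apply: ge_sup; last by move=> _ [y hy <-]; exact: key.
  exists (setdist x0 K), x0 => //; split.
    by exists 0 => //=; rewrite !mul0r !addr0 -surjective_pairing.
  rewrite /oball /= edist_sq !subrr expr0n /= addr0 sqrtr0 //.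
apply: (@le_trans _ _ (bil_width K x0 r0 u / r0)).
  apply: ge_inf; last by exists u.
  by exists 0 => _ [v _ <-]; apply: divr_ge0; [exact: bil_width_ge0|exact: ltW].
rewrite ler_pdivrMr // (le_trans bw) // /h; lra.
Qed.
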